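(* Let $3\le n\le k$ be integers, $\mu>0$ and $q\in[0,1]$, and let $X$ be the discrete-time Markov chain on $\mathbb{N}^{n-1}$ described in the context. If $X$ is stable with stationary distribution $\pi$, then the capacity $$C:=q\mu\,(k-(n-1))\sum_{\mathbf{x}\in R_0}\pi(\mathbf{x})$$ equals $C=\dfrac{q\mu k}{n}$.
   Context: $\mathbb{N}=\{0,1,2,\dots\}$. Vectors have dimension $n-1$; $\mathbf{0}$, $\mathbf{1}$ are the all-zero and all-one vectors, $\mathbf{e}_l$ the $l$-th unit vector. For $j=0,\dots,n-1$, $R_j$ is the set of $\mathbf{x}\in\mathbb{N}^{n-1}$ with exactly $j$ zero entries (so $R_0=\{\mathbf{x}:x_i\ge1\ \forall i\}$, $R_{n-1}=\{\mathbf{0}\}$). $X$ is the Markov chain on $\mathbb{N}^{n-1}$ with nonzero transition probabilities: from $\mathbf{x}\in R_0$, to $\mathbf{x}-\mathbf{1}$ w.p. $\frac{k-(n-1)}{k}$ and to $\mathbf{x}+\mathbf{e}_l$ w.p. $\frac1k$ ($l=1,\dots,n-1$); from $\mathbf{x}\in R_j$, $1\le j\le n-2$, to $\mathbf{x}+\mathbf{e}_l$ w.p. $\frac{k-(n-1-j)}{kj}$ if $x_l=0$ and w.p. $\frac1k$ if $x_l\ge1$; from $\mathbf{0}$ to $\mathbf{e}_l$ w.p. $\frac1{n-1}$. It is the uniformization at rate $k\mu$ of a continuous-time chain modelling a switch with $k$ identical links each generating Bell pairs at rate $\mu$, which performs an $n$-party swap (succeeding w.p. $q$) when $n$ distinct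 links hold pairs. Stable means positive recurrent. *)

(* Defs.v *)
From HB Require Import structures.
From mathcomp Require Import all_boot all_order all_algebra.
From mathcomp Require Import all_classical all_reals all_analysis.
Set Implicit Arguments. Unset Strict Implicit. Unset Printing Implicit Defensive.
Import Order.TTheory GRing.Theory Num.Theory.
Local Open Scope ring_scope.
Local Open Scope classical_set_scope.

Definition state (n : nat) := {ffun 'I_n.-1 -> nat}.

(* number of zero entries: x \in R_j iff nzeros x = j *)
Definition nzeros n (x : state n) : nat := #|[set i | x i == 0%N]|.

Definition R0 n : set (state n) := [set x | nzeros x = 0%N].

Definition incr n (x : state n) (l : 'I_n.-1) : state n :=
  [ffun i => (x i + (i == l))%N].

(* x - 1 (used only for x in R_0) *)
Definition decr1 n (x : state n) : state n := [ffun i => (x i).-1].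

(* Transition matrix of X (uniformization at rate k mu). *)
Definition P (R : realType) (n k : nat) (x y : state n) : R :=
  let j := nzeros x in
  if j == 0%N then
    (if y == decr1 x then (k%:R - (n.-1)%:R) / k%:R
     else if [exists l, y == incr x l] then 1 / k%:R else 0)
  else if j == n.-1 then
    (if [exists l, y == incr x l] then 1 / (n.-1)%:R else 0)
  else
    match [pick l | y == incr x l] with
    | Some l => if x l == 0%N
                then (k%:R - (n.-1 - j)%:R) / (k%:R * j%:R)
                else 1 / k%:R
    | None => 0
    end.

(* First-passage probabilities: fpt m x y = Pr_x(first visit to y at time m+1). *)
Fixpoint fpt (R : realType) (n k : nat) (m : nat) (x y : state n) : \bar R :=
  match m with
  | 0%N => (P R k x y)%:E
  | m'.+1 => \esum_(z in [set z | z <> y]) ((P R k x z)%:E * fpt R k m' z y)%E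
  end.

Definition positive_recurrent (R : realType) (n k : nat) (x : state n) : Prop :=
  \esum_(m in [set: nat]) fpt R k m x x = 1%E /\
  (\esum_(m in [set: nat]) ((m.+1)%:R%:E * fpt R k m x x)%E < +oo)%E.

Definition stable (R : realType) (n k : nat) : Prop :=
  forall x : state n, positive_recurrent R k x.

Definition stationary_distribution (R : realType) (n k : nat) (pi : state n -> R) : Prop :=
  (forall x, 0 <= pi x) /\
  \esum_(x in [set: state n]) (pi x)%:E = 1%E /\
  (forall y, \esum_(x in [set: state n]) ((pi x)%:E * (P R k x y)%:E)%E = (pi y)%:E).

(* Main.v *)
Require Import Defs.
From HB Require Import structures.
From mathcomp Require Import all_boot all_order all_algebra.
From mathcomp Require Import all_classical all_reals all_analysis.
From mathcomp Require Import zify ring lra.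
Import Order.TTheory GRing.Theory Num.Theory.
Local Open Scope ring_scope.
Local Open Scope classical_set_scope.

Section EsumLemmas.
Variable R : realType.
Local Open Scope ereal_scope.

Lemma esum_pt (T : choiceType) (t : T) (v : \bar R) : 0 <= v ->
  \esum_(y in [set: T]) (if y == t then v else 0) = v.
Proof.
move=> v0.
rewrite (eq_esum (b := fun y => if y \in [set t] then v else 0)); last first.
  by move=> y _; rewrite in_set1.
by rewrite -esum_mkcond esum_set1.
Qed.

Lemma esum_supp (T : choiceType) (A : set T) (a : T -> \bar R) (s : seq T) :
  uniq s -> (forall y, 0 <= a y) -> (forall y, y \notin s -> a y = 0) ->
  \esum_(y in A) a y = \sum_(t <- s | t \in A) a t.
Proof.
move=> us a0 as0; rewrite esum_mkcond.
rewrite (eq_esum (b := fun y => \sum_(t <- s)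
   (if y == t then (if t \in A then a t else 0) else 0))); last first.
  move=> y _; case: (boolP (y \in s)) => ys.
    rewrite (bigD1_seq y) //= eqxx big1 ?adde0 // => t /negbTE.
    by rewrite eq_sym => ->.
  rewrite big1_seq ?as0 ?if_same // => t /andP[_ ts].
  by case: eqP => // e; move: ys; rewrite e ts.
rewrite esum_sum; last by move=> y t _ _; case: ifP => //; case: ifP.
rewrite [RHS]big_mkcond /=; apply: eq_bigr => t _.
by rewrite esum_pt //; case: ifP.
Qed.

Lemma esum_exchange (T1 T2 : choiceType) (I : set T1) (J : set T2)
  (a : T1 -> T2 -> \bar R) : (forall i j, 0 <= a i j) ->
  \esum_(i in I) \esum_(j in J) a i j = \esum_(j in J) \esum_(i in I) a i j.
Proof.
move=> a0; rewrite !esum_esum //.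
rewrite (reindex_esum (J `*`` (fun=> I)) _ (fun x => (x.2, x.1))) //.
split=> //=.
- by move=> [i j] [/=].
- by move=> [i1 i2] [j1 j2] /= _ _ [] -> ->.
- by move=> [i1 i2] [Pi1 Qi2] /=; exists (i2, i1).
Qed.

Lemma esumZl (T : choiceType) (S : set T) (a : T -> \bar R) (r : R) :
  (0 <= r)%R -> (forall i, 0 <= a i) ->
  \esum_(i in S) (r%:E * a i) = r%:E * \esum_(i in S) a i.
Proof.
move=> r0 a0; rewrite /esum -ereal_supZl //; last first.
  by apply/set0P; exists 0; exists set0; [exact: fsets_set0|rewrite fsbig_set0].
rewrite image_comp; congr ereal_sup; apply: eq_imagel => A _ /=.
by rewrite ge0_mule_fsumr.
Qed.

End EsumLemmas.

Section Chain.
Variables (R : realType) (n k : nat) (pi : state n -> R).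
Hypotheses (hn : (3 <= n)%N) (hk : (n <= k)%N).
Implicit Types (x y : state n).

Definition Fs (x : state n) : nat := (\sum_(i < n.-1) x i)%N.
Definition supp (x : state n) : seq (state n) :=
  decr1 x :: map (incr x) (enum 'I_n.-1).
Definition pd (x : state n) : R :=
  if nzeros x == 0%N then (k%:R - (n.-1)%:R) / k%:R else 0.
Definition pu (x : state n) : R := \sum_(l < n.-1) P R k x (incr x l).

Lemma incr_inj (x : state n) : injective (incr x).
Proof.
move=> l l' /(congr1 (fun f : state n => f l)); rewrite !ffunE eqxx /=.
by move=> /addnI; case: eqP.
Qed.

Lemma decr_neq_incr (x : state n) l : decr1 x != incr x l.
Proof.
apply/eqP => /(congr1 (fun f : state n => f l)); rewrite !ffunE eqxx /=.
lia.
Qed.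

Lemma uniq_supp x : uniq (supp x).
Proof.
rewrite /= map_inj_uniq ?enum_uniq; last exact: incr_inj.
rewrite andbT; apply/mapP => -[l _ /eqP]; by rewrite (negbTE (decr_neq_incr x l)).
Qed.

Lemma P_supp x y : y \notin supp x -> P R k x y = 0.
Proof.
rewrite inE negb_or => /andP[ny /mapP nm].
have ne l : (y == incr x l) = false.
  by apply/negbTE/eqP => e; apply: nm; exists l; rewrite ?mem_enum.
have ex : [exists l, y == incr x l] = false.
  by apply/negbTE/existsP => -[l]; rewrite ne.
rewrite /P (negbTE ny) ex; case: pickP => [l|_]; first by rewrite ne.
by rewrite !if_same.
Qed.

Lemma P_decr x : P R k x (decr1 x) = pd x.
Proof.
have ex : [exists l, decr1 x == incr x l] = false.
  by apply/negbTE/existsP => -[l]; rewrite (negbTE (decr_neq_incr x l)).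
rewrite /P /pd eqxx ex; case: ifP => // _.
case: pickP => [l|_]; first by rewrite (negbTE (decr_neq_incr x l)).
by rewrite if_same.
Qed.

Lemma in_nz x i : (i \in [set i | x i == 0%N]) = (x i == 0%N).
Proof. by apply/idP/idP => [/set_mem|/mem_set]. Qed.

Lemma nzeros_le (x : state n) : (nzeros x <= n.-1)%N.
Proof. by rewrite /nzeros -[X in (_ <= X)%N]card_ord max_card. Qed.

Lemma P_ge0 x y : 0 <= P R k x y.
Proof.
have h1 : (n.-1 <= k)%N by lia.
have h2 : (n.-1 - nzeros x <= k)%N by lia.
rewrite /P; case: ifP => _.
  case: ifP => _; first by rewrite divr_ge0 ?subr_ge0 ?ler_nat.
  by case: ifP => _; rewrite ?divr_ge0.
case: ifP => _; first by case: ifP => _; rewrite ?divr_ge0.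
case: pickP => [l _|_] //; case: ifP => _; rewrite ?divr_ge0 ?mulr_ge0 ?subr_ge0 ?ler_nat //.
Qed.

Lemma pd_ge0 x : 0 <= pd x.
Proof. by rewrite -P_decr P_ge0. Qed.

Lemma pu_val x : pu x = if nzeros x == 0%N then (n.-1)%:R / k%:R else 1.
Proof.
have k0 : k%:R != 0 :> R by rewrite pnatr_eq0; lia.
have n0 : (n.-1)%:R != 0 :> R by rewrite pnatr_eq0; lia.
rewrite /pu /P; case: ifP => j0.
  rewrite (eq_bigr (fun _ => 1 / k%:R)); last first.
    move=> l _; rewrite eq_sym (negbTE (decr_neq_incr x l)).
    by have -> : [exists l0, incr x l == incr x l0] by apply/existsP; exists l.
  by rewrite sumr_const card_ord -mulr_natl; field.
case: (boolP (nzeros x == n.-1)) => jn.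
  rewrite (eq_bigr (fun _ => 1 / (n.-1)%:R)); last first.
    move=> l _.
    by have -> : [exists l0, incr x l == incr x l0] by apply/existsP; exists l.
  by rewrite sumr_const card_ord -mulr_natl; field.
set j := nzeros x.
set c := (k%:R - (n.-1 - j)%:R) / (k%:R * j%:R) : R.
rewrite (eq_bigr (fun l => if x l == 0%N then c else 1 / k%:R)); last first.
  move=> l _; case: pickP => [l' /eqP/incr_inj <- //|/(_ l)].
  by rewrite eqxx.
rewrite (bigID (fun l => x l == 0%N)) /=.
rewrite (eq_bigr (fun _ => c)); last by move=> i ->.
rewrite [X in _ + X](eq_bigr (fun _ => 1 / k%:R)); last by move=> i /negbTE ->.
rewrite (sumr_const [pred i | x i == 0%N]) (sumr_const [pred i | x i != 0%N]).
have cj : #|[pred i | x i == 0%N]| = j.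
  by rewrite /j /nzeros; apply: eq_card => i; rewrite in_nz inE.
have cn : #|[pred i | x i != 0%N]| = (n.-1 - j)%N.
  have e := cardC [pred i | x i == 0%N]; rewrite card_ord cj in e.
  apply/eqP; rewrite -(eqn_add2l j) subnKC ?nzeros_le //; apply/eqP.
  rewrite -[RHS]e; congr (_ + _); apply: eq_card => i; rewrite !inE.
rewrite cj cn -(mulr_natl c) -(mulr_natl (1 / k%:R)) /c natrB ?nzeros_le //.
have jp : j%:R != 0 :> R by rewrite pnatr_eq0 j0.
by field; rewrite k0 jp.
Qed.

Lemma pu_ge0 x : 0 <= pu x.
Proof. by rewrite /pu sumr_ge0 // => l _; exact: P_ge0. Qed.

Lemma row_sum x : pd x + pu x = 1.
Proof.
have k0 : k%:R != 0 :> R by rewrite pnatr_eq0; lia.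
rewrite pu_val /pd; case: ifP => _; last by rewrite add0r.
by rewrite -mulrDl subrK divff.
Qed.

Lemma Fs_incr x l : Fs (incr x l) = (Fs x).+1.
Proof.
rewrite /Fs (eq_bigr (fun i => x i + (i == l))%N); last by move=> i _; rewrite ffunE.
have h : (\sum_(i < n.-1) (i == l) = 1)%N.
  by rewrite (bigD1 l) //= eqxx big1 // => i /negbTE ->.
by rewrite big_split /= h addn1.
Qed.

Lemma Fs_decr x : nzeros x = 0%N -> Fs (decr1 x) = (Fs x - n.-1)%N /\ (n.-1 <= Fs x)%N.
Proof.
move=> /card0_eq z.
have nz i : x i != 0%N by have := z i; rewrite in_nz inE => ->.
have : Fs x = (Fs (decr1 x) + n.-1)%N.
  have -> : n.-1 = (\sum_(i < n.-1) 1)%N by rewrite sum_nat_const card_ord muln1.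
  rewrite /Fs -big_split /=.
  by apply: eq_bigr => i _; rewrite ffunE addn1 prednK // lt0n.
lia.
Qed.


Hypotheses (pi0 : forall x, 0 <= pi x)
  (psum : \esum_(x in [set: state n]) (pi x)%:E = 1%E)
  (pstat : forall y, \esum_(x in [set: state n]) ((pi x)%:E * (P R k x y)%:E)%E = (pi y)%:E).

Lemma EFin_if (b : bool) (v : R) : (if b then v%:E else 0%E) = (if b then v else 0)%:E.
Proof. by case: b. Qed.

Lemma esum_row x (A : set (state n)) (c : R) : 0 <= c ->
  \esum_(y in A) (c * P R k x y)%:E =
  ((if decr1 x \in A then (c * pd x)%:E else 0) +
   \sum_(l < n.-1 | incr x l \in A) (c * P R k x (incr x l))%:E)%E.
Proof.
move=> c0; rewrite (@esum_supp R _ A _ (supp x)); last 3 first.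
- exact: uniq_supp.
- by move=> y; rewrite lee_fin mulr_ge0 // P_ge0.
- by move=> y /P_supp ->; rewrite mulr0.
rewrite big_cons big_map big_enum_cond /= P_decr.
by case: ifP => _; rewrite ?add0e.
Qed.

Lemma in_setb (T : Type) (b : pred T) (z : T) : (z \in [set y | b y]) = b z.
Proof. by apply/idP/idP => [/set_mem|/mem_set]. Qed.

Lemma sum_incr x m :
  \sum_(l < n.-1 | incr x l \in [set y : state n | (Fs y <= m)%N])
     (pi x * P R k x (incr x l))%:E = (if (Fs x < m)%N then pi x * pu x else 0)%:E.
Proof.
under eq_bigl do rewrite in_setb Fs_incr.
rewrite sumEFin; congr EFin.
case: ifP => h; first by rewrite /pu mulr_sumr.
by rewrite big_pred0.
Qed.

Lemma level m :
  \esum_(x in [set: state n]) (if Fs x == m then pi x * pu x else 0)%:E =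
  \esum_(x in [set: state n])
     (if (m < Fs x <= m + n.-1)%N then pi x * pd x else 0)%:E.
Proof.
set L := [set y : state n | (Fs y <= m)%N].
set A := fun x => (if (Fs x <= m)%N then pi x * pd x else 0) +
                  (if (Fs x < m)%N then pi x * pu x else 0).
have h1 : \esum_(y in L) (pi y)%:E = \esum_(x in [set: state n])
   (A x + (if Fs x == m then pi x * pu x else 0))%:E.
  rewrite esum_mkcond; apply: eq_esum => x _; rewrite in_setb /A.
  have rs := row_sum x.
  case: (ltngtP (Fs x) m) => h /=.
  - by rewrite !addr0 -mulrDr rs mulr1.
  - by rewrite !addr0.
  - by rewrite addr0 -mulrDr rs mulr1.
have h2 : \esum_(y in L) (pi y)%:E = \esum_(x in [set: state n])
   (A x + (if (m < Fs x <= m + n.-1)%N then pi x * pd x else 0))%:E.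
  under eq_esum do rewrite -pstat.
  rewrite esum_exchange; last by move=> i j; rewrite -EFinM lee_fin mulr_ge0 ?P_ge0.
  apply: eq_esum => x _.
  under eq_esum do rewrite -EFinM.
  rewrite esum_row // sum_incr in_setb EFin_if -EFinD /A; congr EFin.
  have [z|z] := eqVneq (nzeros x) 0%N; last first.
    have pd0 : pd x = 0 by rewrite /pd (negbTE z).
    by rewrite pd0 mulr0 !if_same addr0.
  have [e1 e2] := Fs_decr x z; rewrite e1.
  case: (leqP (Fs x) m) => h.
    have -> : (Fs x - n.-1 <= m)%N = true by apply/idP; lia.
    by rewrite addr0.
  case: (leqP (Fs x) (m + n.-1)) => h'.
    have -> : (Fs x - n.-1 <= m)%N = true by apply/idP; lia.
    by rewrite /= add0r addrC.
  have -> : (Fs x - n.-1 <= m)%N = false by apply/negbTE; rewrite -ltnNge; lia.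
  by rewrite !addr0 add0r.
have Afin : \esum_(x in [set: state n]) (A x)%:E \is a fin_num.
  rewrite ge0_fin_numE; last by apply: esum_ge0 => x _; rewrite lee_fin /A addr_ge0 //;
    case: ifP => _; rewrite ?mulr_ge0 ?pd_ge0 ?pu_ge0.
  apply: (le_lt_trans (y := \esum_(x in [set: state n]) (pi x)%:E)); last by rewrite psum ltry.
  apply: le_esum => x _; rewrite lee_fin /A -[leRHS]mulr1 -(row_sum x) mulrDr.
  by rewrite lerD //; case: ifP => _; rewrite ?mulr_ge0 ?pd_ge0 ?pu_ge0.
have := etrans (esym h1) h2.
under eq_esum do rewrite EFinD.
under [X in _ = X -> _]eq_esum do rewrite EFinD.
have Age0 x : (0 <= (A x)%:E)%E.
  by rewrite lee_fin /A addr_ge0 //; case: ifP => _; rewrite ?mulr_ge0 ?pd_ge0 ?pu_ge0.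
rewrite !esumD //; try by move=> x _; rewrite lee_fin; case: ifP => _; rewrite ?mulr_ge0 ?pd_ge0 ?pu_ge0.
move/(congr1 (fun z => z - \esum_(x in [set: state n]) (A x)%:E)%E).
by rewrite !(addeC (\esum_(x in [set: state n]) (A x)%:E)) !addeK.
Qed.

Lemma sum_iota_const a b (v : R) :
  \sum_(t <- iota a b | t \in [set: nat]) v = b%:R * v.
Proof.
rewrite (eq_bigl xpredT) => [|t]; last by rewrite in_setT.
elim: b a => [|b IH] a; first by rewrite big_nil mul0r.
by rewrite /= big_cons IH -addn1 natrD mulrDl mul1r addrC.
Qed.

Lemma sum_up :
  \esum_(m in [set: nat]) \esum_(x in [set: state n])
     (if Fs x == m then pi x * pu x else 0)%:E =
  \esum_(x in [set: state n]) (pi x * pu x)%:E.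
Proof.
rewrite esum_exchange; last first.
  by move=> m x; rewrite lee_fin; case: ifP => _; rewrite ?mulr_ge0 ?pu_ge0.
apply: eq_esum => x _.
rewrite (eq_esum (b := fun m => if m == Fs x then (pi x * pu x)%:E else 0%E)).
  by rewrite esum_pt // lee_fin mulr_ge0 ?pu_ge0.
by move=> m _; rewrite eq_sym; case: ifP.
Qed.

Lemma sum_down :
  \esum_(m in [set: nat]) \esum_(x in [set: state n])
     (if (m < Fs x <= m + n.-1)%N then pi x * pd x else 0)%:E =
  \esum_(x in [set: state n]) ((n.-1)%:R * (pi x * pd x))%:E.
Proof.
rewrite esum_exchange; last first.
  by move=> m x; rewrite lee_fin; case: ifP => _; rewrite ?mulr_ge0 ?pd_ge0.
apply: eq_esum => x _.
have [z|z] := eqVneq (nzeros x) 0%N; last first.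
  have pd0 : pd x = 0 by rewrite /pd (negbTE z).
  rewrite pd0 !mulr0; apply: esum1 => m _; by rewrite if_same.
have [_ e2] := Fs_decr x z.
rewrite (@esum_supp R _ _ _ (iota (Fs x - n.-1) n.-1)); last 3 first.
- exact: iota_uniq.
- by move=> m; rewrite lee_fin; case: ifP => _; rewrite ?mulr_ge0 ?pd_ge0.
- move=> m; rewrite mem_iota => hm; rewrite ifF //; apply/negbTE/negP => /andP[a b].
  by move/negP: hm; apply; apply/andP; split; lia.
rewrite big_seq_cond (eq_bigr (fun=> (pi x * pd x)%:E)); last first.
  move=> t /andP[ti _]; rewrite mem_iota in ti; rewrite ifT //.
  by apply/andP; split; lia.
by rewrite -big_seq_cond sumEFin sum_iota_const.
Qed.

Lemma capacity (q mu : R) :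
  ((q * mu * (k%:R - (n.-1)%:R))%:E * \esum_(x in @R0 n) (pi x)%:E)%E
    = (q * mu * k%:R / n%:R)%:E.
Proof.
have E : \esum_(x in [set: state n]) (pi x * pu x)%:E =
         \esum_(x in [set: state n]) ((n.-1)%:R * (pi x * pd x))%:E.
  by rewrite -sum_up -sum_down; apply: eq_esum => m _; exact: level.
rewrite (esumID (@R0 n)) in E; last by move=> x _; rewrite lee_fin mulr_ge0 ?pu_ge0.
rewrite [X in _ = X](esumID (@R0 n)) in E; last first.
  by move=> x _; rewrite lee_fin !mulr_ge0 ?pd_ge0.
have ps0 := psum.
rewrite (esumID (@R0 n)) in ps0; last by move=> x _; rewrite lee_fin.
rewrite !setTI in E ps0.
set S := \esum_(x in @R0 n) (pi x)%:E in ps0 *.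
set T := \esum_(x in ~` @R0 n) (pi x)%:E in ps0.
have K0 : k%:R != 0 :> R by rewrite pnatr_eq0; lia.
have e1 : \esum_(x in @R0 n) (pi x * pu x)%:E = (((n.-1)%:R / k%:R)%:E * S)%E.
  rewrite -esumZl; [|by rewrite divr_ge0|by move=> x; rewrite lee_fin].
  apply: eq_esum => x /= z; rewrite pu_val z eqxx -EFinM mulrC //.
have e2 : \esum_(x in ~` @R0 n) (pi x * pu x)%:E = T.
  apply: eq_esum => x /= z; rewrite pu_val; case: eqP => // _; by rewrite mulr1.
have e3 : \esum_(x in @R0 n) ((n.-1)%:R * (pi x * pd x))%:E =
          (((n.-1)%:R * ((k%:R - (n.-1)%:R) / k%:R))%:E * S)%E.
  rewrite -esumZl; last by move=> x; rewrite lee_fin.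
    apply: eq_esum => x /= z; rewrite /pd z eqxx -EFinM; congr EFin; ring.
  by rewrite mulr_ge0 ?divr_ge0 // subr_ge0 ler_nat; lia.
have e4 : \esum_(x in ~` @R0 n) ((n.-1)%:R * (pi x * pd x))%:E = 0%E.
  apply: esum1 => x /= z; rewrite /pd; case: eqP => // _; by rewrite !mulr0.
rewrite e1 e2 e3 e4 adde0 in E.
have S0 : (0 <= S)%E by apply: esum_ge0 => x _; rewrite lee_fin.
have T0 : (0 <= T)%E by apply: esum_ge0 => x _; rewrite lee_fin.
have Sfin : S \is a fin_num.
  by rewrite ge0_fin_numE //; apply: (le_lt_trans (leeDl S T0)); rewrite ps0 ltry.
have Tfin : T \is a fin_num.
  by rewrite ge0_fin_numE //; apply: (le_lt_trans (leeDr T S0)); rewrite ps0 ltry.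
rewrite -(fineK Sfin) -(fineK Tfin) -EFinD in ps0.
rewrite -(fineK Sfin) -(fineK Tfin) -!EFinM -EFinD in E.
have ps := EFin_inj ps0; have {}E := EFin_inj E.
rewrite -(fineK Sfin) -EFinM; congr EFin.
set s := fine S in ps E *; set t := fine T in ps E.
set N1 := (n.-1)%:R : R; set K := k%:R : R.
have hn1 : n%:R = N1 + 1 :> R by rewrite /N1 natr1 prednK //; lia.
have N10 : N1 + 1 != 0 by rewrite -hn1 pnatr_eq0; lia.
have tE : t = 1 - s by rewrite -ps; ring.
rewrite tE in E.
have e5 : s * (K - N1) * (N1 + 1) / K = 1.
  have -> : s * (K - N1) * (N1 + 1) / K = N1 * ((K - N1) / K) * s - N1 / K * s + s.
    by field.
  by rewrite -E; ring.
have e6 : s * (K - N1) * (N1 + 1) = K.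
  have K1 : K != 0 by [].
  have := divfK K1 (s * (K - N1) * (N1 + 1)); rewrite e5 mul1r => h.
  exact: esym h.
rewrite hn1.
have -> : q * mu * K / (N1 + 1) = q * mu * (s * (K - N1) * (N1 + 1)) / (N1 + 1).
  by rewrite e6.
by field.
Qed.

End Chain.


Theorem proposition5p1 (R : realType) (n k : nat) (mu q : R) (pi : state n -> R) :
  (3 <= n)%N -> (n <= k)%N -> 0 < mu -> 0 <= q <= 1 ->
  stable R n k -> stationary_distribution k pi ->
  ((q * mu * (k%:R - (n.-1)%:R))%:E * \esum_(x in @R0 n) (pi x)%:E)%E
    = (q * mu * k%:R / n%:R)%:E.
Proof.
move=> hn hk _ _ _ [p0 [ps pst]].
exact: capacity.
Qed.
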